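(* Suppose $\mathbb{Q}_1$ is a probability measure on $(\Omega,\mathcal F(T))$ such that each $S_{1,j}$, $j=1,\dots,d$, is a real-valued (in particular finite) nonnegative $\mathbb{Q}_1$-martingale (possibly hitting $0$). Define probability measures $\mathbb{Q}_i$ by $\frac{\mathrm d\mathbb{Q}_i}{\mathrm d\mathbb{Q}_1}=S_{i,1}(0)S_{1,i}(T)$, $i=1,\dots,d$. Then $(\mathbb{Q}_i)_i$ is a numéraire-consistent family, each $\mathbb{Q}_i$ is absolutely continuous with respect to $\mathbb{Q}_1$, and $\sum_i\mathbb{Q}_i\sim\mathbb{Q}_1$. Moreover, if $\overline{\mathbb{Q}}$ denotes the corresponding valuation measure with respect to the basket (i.e. $\overline{\mathbb Q}=\sum_i\overline S_i(0)\mathbb Q_i$), then for all $r\in[0,T]$ and $C\in\mathcal C$ with $\overline C\in L^1(\overline{\mathbb Q})$ one has $\mathbb{E}^{\overline{\mathbb{Q}}}_r[\overline C]=\overline S_1(r)\mathbb E^{\mathbb Q_1}_r[C_1]$, and for each $i$, on the event $\{i\in\mathfrak A(r)\}$, $$\frac{\mathbb{E}^{\overline{\mathbb{Q}}}_r[\overline C]}{\overline S_i(r)}=\mathbb{E}^{\mathbb{Q}_i}_r[C_i]+S_{i,1}(r)\,\mathbb{E}^{\mathbb{Q}_1}_r\big[C_1\mathbf 1_{\{S_{1,i}(T)=0\}}\big].$$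
   Context: Fix $T>0$, $d\in\mathbb N$, and a filtered space $(\Omega,\mathcal{F}(T),(\mathcal{F}(t))_{t\in[0,T]})$ with right-continuous filtration and trivial $\mathcal{F}(0)$. For $x,y\in[0,\infty]$ the product $xy$ is defined except when one is $0$ and the other is $\infty$. An exchange matrix is $s=(s_{i,j})\in[0,\infty]^{d\times d}$ with $s_{i,i}=1$ and $s_{i,j}s_{j,k}=s_{i,k}$ for all $i,j,k$ whenever the product is defined. $S=(S_{i,j})_{i,j=1}^d$ is a right-continuous adapted $[0,\infty]^{d\times d}$-valued process such that $S(t)$ is an exchange matrix for every $t$. Active currencies: $\mathfrak{A}(t)=\{i:\sum_jS_{i,j}(t)<\infty\}$, with $\mathfrak A(0)=\{1,\dots,d\}$. Basket prices: $\overline S_i=1/\sum_jS_{i,j}$. A value vector for an exchange matrix $s$ is $v\in[0,\infty]^d$ with $s_{i,j}v_j=v_i$ whenever defined; $\mathcal{C}$ is the set of $\mathcal{F}(T)$-measurable value vectors for $S(T)$, and for $C\in\mathcal C$, $\overline C=\frac{1}{|\mathfrak{A}(T)|}\sum_{j\in\mathfrak{A}(T)}\overline S_j(T)C_j$. A family $(\mathbb{Q}_i)_{i=1}^d$ of probability measures is numéraire-consistent if $\mathbb{E}^{\mathbb{Q}_i}[S_{i,j}(t)\mathbf{1}_A]=S_{i,j}(0)\,\mathbb{Q}_j(A\cap\{S_{j,i}(t)>0\})$ for all $i,j$, $t\in[0,T]$, $A\in\mathcal{F}(t)$. A valuation measure with respect to the basket is a probability measure under which $\overline S$ is a martingale.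 $\mathbb{E}^{\mathbb Q}_r$ is conditional expectation given $\mathcal F(r)$. *)

(* Defs.v *)
From HB Require Import structures.
From mathcomp Require Import all_boot all_order all_algebra.
From mathcomp Require Import all_classical all_reals all_analysis measurable_realfun.
Set Implicit Arguments. Unset Strict Implicit. Unset Printing Implicit Defensive.
Import Order.TTheory GRing.Theory Num.Theory.
Local Open Scope classical_set_scope.
Local Open Scope ring_scope.
Local Open Scope ereal_scope.

Section Defs.
Context {R : realType}.

Definition prod_defined (x y : \bar R) : Prop :=
  ~ ((x = 0 /\ y = +oo) \/ (x = +oo /\ y = 0)).

Definition exchange_matrix (d : nat) (s : 'I_d -> 'I_d -> \bar R) : Prop :=
  [/\ forall i j, 0 <= s i j,
      forall i, s i i = 1 &
      forall i j k, prod_defined (s i j) (s j k) -> s i j * s j k = s i k].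

Definition value_vector (d : nat) (s : 'I_d -> 'I_d -> \bar R)
    (v : 'I_d -> \bar R) : Prop :=
  (forall j, 0 <= v j) /\
  (forall i j, prod_defined (s i j) (v j) -> s i j * v j = v i).

Context {dO : measure_display} {Omega : measurableType dO}.

Definition G_measurable (G : set (set Omega)) (f : Omega -> \bar R) : Prop :=
  forall B : set (\bar R), measurable B -> G (f @^-1` B).

Definition filtration (T : R) (F : R -> set (set Omega)) : Prop :=
  [/\ forall t, (0 <= t <= T)%R -> sigma_algebra setT (F t),
      forall s t, (0 <= s)%R -> (s <= t)%R -> (t <= T)%R -> F s `<=` F t,
      F T = [set A | measurable A],
      forall t, (0 <= t)%R -> (t < T)%R ->
        F t = [set A | forall u, (t < u)%R -> (u <= T)%R -> F u A] &
      forall A, F 0%R A -> A = set0 \/ A = setT].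

Definition active (d : nat) (S : 'I_d -> 'I_d -> R -> Omega -> \bar R)
    (t : R) (x : Omega) (i : 'I_d) : bool :=
  \sum_(j < d) S i j t x < +oo.

Definition Sbar (d : nat) (S : 'I_d -> 'I_d -> R -> Omega -> \bar R)
    (i : 'I_d) (t : R) (x : Omega) : \bar R :=
  (\sum_(j < d) S i j t x)^-1.

Definition Cbar (d : nat) (S : 'I_d -> 'I_d -> R -> Omega -> \bar R)
    (T : R) (C : 'I_d -> Omega -> \bar R) (x : Omega) : \bar R :=
  ((#|[pred j | active S T x j]|%:R)^-1)%:E *
  \sum_(j < d | active S T x j) (Sbar S j T x * C j x).

Definition numeraire_consistent (d : nat) (T : R) (F : R -> set (set Omega))
    (S : 'I_d -> 'I_d -> R -> Omega -> \bar R)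
    (Q : 'I_d -> probability Omega R) : Prop :=
  forall i j t A, (0 <= t <= T)%R -> F t A ->
    forall x0 : Omega,  (* S(0) is deterministic since F(0) is trivial *)
    \int[Q i]_(x in A) S i j t x =
      S i j 0%R x0 * Q j (A `&` [set x | 0 < S j i t x]).

(** Y is a version of the (generalized, [0,oo]-valued) conditional expectation
    E^P[X | G] of a nonnegative random variable X *)
Definition cond_exp (P : probability Omega R) (G : set (set Omega))
    (X Y : Omega -> \bar R) : Prop :=
  [/\ G_measurable G Y, forall x, 0 <= Y x &
      forall A, G A -> \int[P]_(x in A) Y x = \int[P]_(x in A) X x].

End Defs.

(* Main.v *)
Require Import Defs.
From HB Require Import structures.
From mathcomp Require Import all_boot all_order all_algebra.
From mathcomp Require Import all_classical all_reals all_analysis measurable_realfun.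
Import Order.TTheory GRing.Theory Num.Theory.
Local Open Scope classical_set_scope.
Local Open Scope ring_scope.
Local Open Scope ereal_scope.
Import HBNNSimple.
Definition dmeas d (T : measurableType d) (R : realType)
  (mu : {measure set T -> \bar R}) (g : T -> \bar R) (A : set T) : \bar R :=
  if pselect (measurable_fun setT g /\ forall x, 0 <= g x)
  then \int[mu]_(x in A) g x else 0.
Arguments dmeas {d T R}.

Lemma dmeas0 d (T : measurableType d) (R : realType)
  (mu : {measure set T -> \bar R}) (g : T -> \bar R) : dmeas mu g set0 = 0.
Proof. by rewrite /dmeas; case: pselect => // h; rewrite integral_set0. Qed.

Lemma dmeas_ge0 d (T : measurableType d) (R : realType)
  (mu : {measure set T -> \bar R}) (g : T -> \bar R) A : 0 <= dmeas mu g A.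
Proof. by rewrite /dmeas; case: pselect => // -[mg g0]; exact: integral_ge0. Qed.

Lemma dmeas_sa d (T : measurableType d) (R : realType)
  (mu : {measure set T -> \bar R}) (g : T -> \bar R) :
  semi_sigma_additive (dmeas mu g).
Proof.
move=> A mA tA mUA; rewrite /dmeas; case: pselect => [[mg g0]|h].
  rewrite ge0_integral_bigcup//; last exact: measurable_funTS.
  apply: is_cvg_ereal_nneg_natsum_cond => n _ _.
  exact: integral_ge0.
rewrite (_ : (fun n => _) = fun=> 0); first exact: cvg_cst.
by apply/funext => n; rewrite big1.
Qed.

HB.instance Definition _ d (T : measurableType d) (R : realType)
  (mu : {measure set T -> \bar R}) (g : T -> \bar R) :=
  isMeasure.Build _ T R (dmeas mu g) (@dmeas0 _ _ _ mu g) (@dmeas_ge0 _ _ _ mu g)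
   (@dmeas_sa _ _ _ mu g).

Definition dprob d (T : measurableType d) (R : realType)
  (mu : probability T R) (g : T -> \bar R) (A : set T) : \bar R :=
  if pselect ([/\ measurable_fun setT g, (forall x, 0 <= g x) & \int[mu]_x g x = 1]) then dmeas mu g A else mu A.
Arguments dprob {d T R}.

Lemma dprob0 d (T : measurableType d) (R : realType)
  (mu : probability T R) (g : T -> \bar R) : dprob mu g set0 = 0.
Proof. by rewrite /dprob; case: pselect => h; rewrite ?measure0. Qed.

Lemma dprob_ge0 d (T : measurableType d) (R : realType)
  (mu : probability T R) (g : T -> \bar R) A : 0 <= dprob mu g A.
Proof. by rewrite /dprob; case: pselect => h; [exact: dmeas_ge0|exact: measure_ge0]. Qed.

Lemma dprob_sa d (T : measurableType d) (R : realType)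
  (mu : probability T R) (g : T -> \bar R) :
  semi_sigma_additive (dprob mu g).
Proof.
rewrite /dprob; case: pselect => h; exact: measure_semi_sigma_additive.
Qed.

HB.instance Definition _ d (T : measurableType d) (R : realType)
  (mu : probability T R) (g : T -> \bar R) :=
  isMeasure.Build _ T R (dprob mu g) (@dprob0 _ _ _ mu g) (@dprob_ge0 _ _ _ mu g)
   (@dprob_sa _ _ _ mu g).

Lemma dmeasE d (T : measurableType d) (R : realType)
  (mu : {measure set T -> \bar R}) (g : T -> \bar R) :
  measurable_fun setT g -> (forall x, 0 <= g x) ->
  forall A, dmeas mu g A = \int[mu]_(x in A) g x.
Proof. by move=> mg g0 A; rewrite /dmeas; case: pselect => [h|[]]. Qed.

Lemma dprob_setT d (T : measurableType d) (R : realType)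
  (mu : probability T R) (g : T -> \bar R) : dprob mu g setT = 1.
Proof.
rewrite /dprob; case: pselect => [[mg g0 g1]|h]; last exact: probability_setT.
by rewrite dmeasE.
Qed.

HB.instance Definition _ d (T : measurableType d) (R : realType)
  (mu : probability T R) (g : T -> \bar R) :=
  Measure_isProbability.Build _ T R (dprob mu g) (@dprob_setT _ _ _ mu g).

Lemma dprobE d (T : measurableType d) (R : realType)
  (mu : probability T R) (g : T -> \bar R) :
  measurable_fun setT g -> (forall x, 0 <= g x) -> \int[mu]_x g x = 1 ->
  forall A, dprob mu g A = \int[mu]_(x in A) g x.
Proof.
move=> mg g0 g1 A; rewrite /dprob; case: pselect => [h|[]]; last by split.
by rewrite /dmeas; case: pselect => [h'|[]].
Qed.


Lemma dmeas_integral d (T : measurableType d) (R : realType)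
  (mu : {measure set T -> \bar R}) (g : T -> \bar R) :
  measurable_fun setT g -> (forall x, 0 <= g x) -> (forall x, g x \is a fin_num) ->
  forall (f : T -> \bar R) E, (forall x, 0 <= f x) ->
    measurable E -> measurable_fun E f ->
  \int[dmeas mu g]_(x in E) f x = \int[mu]_(x in E) (f x * g x).
Proof.
move=> mg g0 gf f E f0 mE mf.
pose h := nnsfun_approx mE mf.
have -> : \int[dmeas mu g]_(x in E) f x =
    lim (\int[dmeas mu g]_(x in E) (EFin \o h n) x @[n --> \oo]).
  have fE x : E x -> f x = lim ((EFin \o h n) x @[n --> \oo]).
    by move=> Ex; apply/esym/cvg_lim => //; exact: cvg_nnsfun_approx.
  under eq_integral => x /[!inE] /fE -> //.
  apply: monotone_convergence => //.
  - move=> n; apply/measurable_EFinP.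
    by apply: (measurable_funS measurableT) => //; exact/measurable_funP.
  - by move=> n x Ex //=; rewrite lee_fin.
  - by move=> x Ex a b ab; rewrite lee_fin; exact/lefP/nd_nnsfun_approx.
have -> : \int[mu]_(x in E) (f \* g) x =
    lim (\int[mu]_(x in E) ((EFin \o h n) \* g) x @[n --> \oo]).
  have fg x : E x -> f x * g x = lim (((EFin \o h n) \* g) x @[n --> \oo]).
    by move=> Ex; apply/esym/cvg_lim => //; apply: cvgeZr;
      [exact: gf|exact: cvg_nnsfun_approx].
  under eq_integral => x /[!inE] /fg -> //.
  apply: monotone_convergence => [//| | |].
  - move=> n; apply/emeasurable_funM; apply/measurable_funTS.
      exact/measurable_EFinP.
    exact: mg.
  - by move=> n x Ex /=; rewrite mule_ge0 ?lee_fin.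
  - by move=> x Ex a b ab/=; rewrite lee_wpmul2r ?lee_fin//; exact/lefP/nd_nnsfun_approx.
suff suf n : \int[mu]_(x in E) ((EFin \o h n) x * g x) =
    \int[dmeas mu g]_(x in E) (EFin \o h n) x.
  by under eq_fun do rewrite -suf.
transitivity (\int[dmeas mu g]_(x in E)
   (\sum_(y \in range (h n)) (y * \1_(h n @^-1` [set y]) x)%:E)); last first.
  by apply: eq_integral => t tE; rewrite /= fimfunE -fsumEFin.
have indich m r : measurable_fun E (fun x => (r * \1_(h m @^-1` [set r]) x)%:E).
  by apply: (measurable_comp measurableT) => //; exact: measurable_funM.
rewrite ge0_integral_fsum//; last by move=> m y Ey; exact: nnfun_muleindic_ge0.
transitivity (\int[mu]_(x in E) (\sum_(y \in range (h n))
    (y * \1_(h n @^-1` [set y]) x)%:E * g x)).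
  under [RHS]eq_integral => x xE.
    rewrite -ge0_mule_fsuml => [|y]; last exact: nnfun_muleindic_ge0.
    rewrite fsumEFin // -(fimfunE _ x); over.
  by [].
rewrite ge0_integral_fsum//; last 2 first.
  - move=> y; apply: emeasurable_funM => //; apply: measurable_funTS.
    exact: mg.
  - by move=> m y Ey; rewrite mule_ge0 ?nnfun_muleindic_ge0.
apply: eq_fsbigr => r rhn.
under [RHS]eq_integral do rewrite EFinM.
rewrite integralZl_indic_nnsfun => //.
under eq_integral do rewrite EFinM -muleA.
rewrite ge0_integralZl//.
- under eq_integral do rewrite muleC.
  rewrite (eq_integral (g \_ (h n @^-1` [set r]))); last first.
    by move=> x xE; rewrite epatch_indic.
  rewrite -integral_mkcondr integral_indic// setIC; congr (_ * _); rewrite /= dmeasE//.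
- apply: emeasurable_funM; first exact/measurable_EFinP.
  exact/measurable_funTS/mg.
- by move=> t Et; rewrite mule_ge0 ?lee_fin.
- by move: rhn; rewrite inE => -[t _ <-]; rewrite lee_fin.
Qed.
Definition restrG d (T : measurableType d) (R : realType) (G : set (set T))
  (mu : {measure set T -> \bar R}) (A : set (g_sigma_algebraType G)) : \bar R :=
  if pselect ((forall B, G B -> measurable B) /\ sigma_algebra setT G)
  then mu A else 0.
Arguments restrG {d T R}.

Lemma restrG0 d (T : measurableType d) (R : realType) (G : set (set T))
  (mu : {measure set T -> \bar R}) : restrG G mu set0 = 0.
Proof. by rewrite /restrG; case: pselect => h //; rewrite measure0. Qed.

Lemma restrG_ge0 d (T : measurableType d) (R : realType) (G : set (set T))
  (mu : {measure set T -> \bar R}) A : 0 <= restrG G mu A.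
Proof. by rewrite /restrG; case: pselect => h //. Qed.

Lemma restrG_sa d (T : measurableType d) (R : realType) (G : set (set T))
  (mu : {measure set T -> \bar R}) : semi_sigma_additive (restrG G mu).
Proof.
move=> F mF tF mUF; rewrite /restrG; case: pselect => [[GM sG]|h].
  have E : <<s G>> = G by exact: sigma_algebra_id.
  apply: measure_semi_sigma_additive => //.
  - by move=> n; apply: GM; rewrite -E; exact: mF.
  - by apply: GM; rewrite -E; exact: mUF.
rewrite (_ : (fun n => _) = fun=> 0); first exact: cvg_cst.
by apply/funext => n; rewrite big1.
Qed.

HB.instance Definition _ d (T : measurableType d) (R : realType) (G : set (set T))
  (mu : {measure set T -> \bar R}) :=
  isMeasure.Build _ _ R (restrG G mu) (@restrG0 _ _ _ G mu) (@restrG_ge0 _ _ _ G mu)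
   (@restrG_sa _ _ _ G mu).

Lemma idG_measurable d (T : measurableType d) (G : set (set T)) :
  (forall B, G B -> measurable B) -> sigma_algebra setT G ->
  measurable_fun setT (id : T -> g_sigma_algebraType G).
Proof.
move=> GM sG _ B mB; rewrite setTI; apply: GM.
by rewrite -(sigma_algebra_id sG); exact: mB.
Qed.

Lemma GmeasP d (T : measurableType d) (R : realType) (G : set (set T))
  (f : T -> \bar R) (D : set (g_sigma_algebraType G)) :
  G_measurable G f -> measurable_fun D (f : g_sigma_algebraType G -> \bar R).
Proof.
move=> Gf mD B mB; apply: measurableI => //.
by apply: sub_sigma_algebra; exact: Gf.
Qed.

Lemma restrG_integral d (T : measurableType d) (R : realType) (G : set (set T))
  (mu : {measure set T -> \bar R}) :
  (forall B, G B -> measurable B) -> sigma_algebra setT G ->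
  forall (f : T -> \bar R) (A : set T), G A -> G_measurable G f ->
  (forall x, 0 <= f x) ->
  \int[restrG G mu]_(x in (A : set (g_sigma_algebraType G))) f x =
  \int[mu]_(x in A) f x.
Proof.
move=> GM sG f A GA Gf f0.
have -> : restrG G mu = pushforward mu (id : T -> g_sigma_algebraType G).
  by apply/funext => B; rewrite /restrG; case: pselect => // -[]; split.
rewrite (ge0_integral_pushforward (@idG_measurable _ _ G GM sG)) //.
all: try by [apply: sub_sigma_algebra | exact: GmeasP | move=> y _; exact: f0].
Qed.

Lemma Gmeas_meas d (T : measurableType d) (R : realType) (G : set (set T))
  (f : T -> \bar R) (D : set T) :
  (forall B, G B -> measurable B) -> G_measurable G f -> measurable_fun D f.
Proof. by move=> GM Gf mD B mB; apply: measurableI => //; apply: GM; exact: Gf. Qed.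

Lemma tower d (T : measurableType d) (R : realType) (G : set (set T))
  (mu : {measure set T -> \bar R}) (M1 M2 : T -> \bar R) :
  (forall B, G B -> measurable B) -> sigma_algebra setT G ->
  measurable_fun setT M1 -> measurable_fun setT M2 ->
  (forall x, 0 <= M1 x) -> (forall x, 0 <= M2 x) ->
  (forall x, M1 x \is a fin_num) -> (forall x, M2 x \is a fin_num) ->
  (forall B, G B -> \int[mu]_(x in B) M1 x = \int[mu]_(x in B) M2 x) ->
  forall g, G_measurable G g -> (forall x, 0 <= g x) ->
  forall A, G A ->
  \int[mu]_(x in A) (g x * M1 x) = \int[mu]_(x in A) (g x * M2 x).
Proof.
move=> GM sG m1 m2 p1 p2 f1 f2 eqM g Gg g0 A GA.
have mA := GM _ GA.
rewrite -!dmeas_integral//; try exact: (@Gmeas_meas _ _ _ G g A GM Gg).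
rewrite -!(@restrG_integral _ _ _ G)//.
apply: eq_measure_integral => B mB _.
rewrite /= /restrG; case: pselect => // hh.
have GB : G B by rewrite -(sigma_algebra_id sG).
change (dmeas mu M1 B = dmeas mu M2 B).
by rewrite !dmeasE//; exact: eqM.
Qed.

Lemma uniq_ce d (T : measurableType d) (R : realType) (G : set (set T))
  (mu : {measure set T -> \bar R}) (f g : T -> \bar R) :
  (forall B, G B -> measurable B) -> sigma_algebra setT G ->
  G_measurable G f -> G_measurable G g ->
  (forall x, 0 <= f x) -> (forall x, 0 <= g x) ->
  \int[mu]_x f x < +oo ->
  (forall A, G A -> \int[mu]_(x in A) f x = \int[mu]_(x in A) g x) ->
  {ae mu, forall x, f x = g x}.
Proof.
move=> GM sG Gf Gg f0 g0 fi eqfg.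
have E : <<s G>> = G by exact: sigma_algebra_id.
have GT : G setT by case: sG => G0 GC _; rewrite -(setD0 setT); exact: GC.
have h : ae_eq (restrG G mu) setT (f : g_sigma_algebraType G -> \bar R) g.
  apply: integral_ae_eq => //.
  - apply/integrableP; split; first exact: GmeasP.

    rewrite (eq_integral (f : g_sigma_algebraType G -> \bar R)); last by move=> x _; rewrite gee0_abs.
    by rewrite restrG_integral.
  - exact: GmeasP.
  - move=> B _ mB; have GB : G B by rewrite -E.
    by rewrite !restrG_integral//; exact: eqfg.
case: h => N [mN N0 sN].
exists N; split.
- by apply: GM; rewrite -E.
- by move: N0; rewrite /= /restrG; case: pselect => [h|[]] //; split.
- by move=> x /= nx; apply: sN => /= hx; apply: nx; exact: hx.
Qed.

Lemma mbool d (T : measurableType d) (b : T -> bool) :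
  measurable [set x | b x] -> measurable_fun setT b.
Proof.
move=> mb _ B mB; rewrite setTI.
have [Bt|Bt] := pselect (B true); have [Bf|Bf] := pselect (B false).
- rewrite (_ : _ @^-1` _ = setT) //; apply/seteqP; split => x //= _; by case: (b x).
- rewrite (_ : _ @^-1` _ = [set x | b x]) //; apply/seteqP; split => x /=; by case: (b x).
- rewrite (_ : _ @^-1` _ = ~` [set x | b x]); first exact: measurableC.
  by apply/seteqP; split => x /=; case: (b x).
- rewrite (_ : _ @^-1` _ = set0) //; apply/seteqP; split => x //=; by case: (b x).
Qed.

Lemma Gmeas_OG d (T : measurableType d) (R : realType) (G : set (set T)) (f : T -> \bar R) :
  sigma_algebra setT G -> measurable_fun setT (f : g_sigma_algebraType G -> \bar R) ->
  G_measurable G f.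
Proof.
move=> sG mf B mB; have := mf measurableT B mB; rewrite setTI.
have E := sigma_algebra_id sG; move=> h.
suff : <<s G>> (f @^-1` B) by rewrite E.
exact: h.
Qed.

Lemma measurable_invR (R : realType) : measurable_fun setT (fun x : R => x^-1)%R.
Proof.
rewrite (_ : setT = ~` [set 0%R] `|` [set 0%R]); last by rewrite setUC setUv.
apply/measurable_funU => //; first by apply: measurableC.
split; last exact: measurable_fun_set1.
apply: open_continuous_measurable_fun; first by rewrite openC; apply: compact_closed => //; exact: compact_set1.
by move=> x /[!inE] /eqP x0; exact: inv_continuous.
Qed.

Set Implicit Arguments. Unset Strict Implicit.
Lemma ex_fin (R : realType) (d : nat) (s : 'I_d -> 'I_d -> \bar R) i j :
  exchange_matrix s -> s i j < +oo -> s j i < +oo ->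
  exists r : R, [/\ (0 < r)%R, s i j = r%:E & s j i = (r^-1)%:E].
Proof.
case=> s0 s1 sm hij hji.
have := s0 i j; have := s0 j i.
case Eij : (s i j) hij => [a| |] // _; case Eji : (s j i) hji => [b| |] // _.
rewrite !lee_fin => b0 a0.
have := sm i j i; rewrite Eij Eji s1 => h.
have ab : (a * b = 1)%R.
  by apply/EFin_inj; rewrite EFinM h //; case=> -[].
exists a; split => //.
- rewrite lt_neqAle a0 andbT; apply/eqP => a0'.
  by move: ab; rewrite -a0' mul0r => /eqP; rewrite eq_sym oner_eq0.
- have a0' : a != 0%R by apply/eqP => a0'; move: ab; rewrite a0' mul0r => /eqP; rewrite eq_sym oner_eq0.
  by congr EFin; apply: (mulfI a0'); rewrite ab mulfV.
Qed.

Lemma ex_comp (R : realType) (d : nat) (s : 'I_d -> 'I_d -> \bar R) i j k (r : R) :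
  exchange_matrix s -> (0 < r)%R -> s i j = r%:E -> s i k = s i j * s j k.
Proof.
case=> s0 s1 sm r0 hij; rewrite (sm i j k) // hij.
move=> [[h _]|[h _]] //; case: h => h; by move: r0; rewrite h ltxx.
Qed.

Lemma sum_fin (R : realType) (d : nat) (f : 'I_d -> \bar R) :
  (forall j, 0 <= f j) -> (forall j, f j < +oo) ->
  \sum_(j < d) f j = (\sum_(j < d) fine (f j))%:E.
Proof.
move=> f0 fi; rewrite -sumEFin; apply: eq_bigr => j _.
by rewrite fineK// ge0_fin_numE.
Qed.

Lemma term_le_sum (R : realType) (d : nat) (f : 'I_d -> \bar R) k :
  (forall j, 0 <= f j) -> f k <= \sum_(j < d) f j.
Proof.
move=> f0; rewrite (bigD1 k)//=; apply: leeDl.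
by apply: sume_ge0 => j _.
Qed.

Lemma alg_D (R : realType) (d : nat) (s : 'I_d -> 'I_d -> \bar R) one :
  exchange_matrix s -> (forall j, s one j < +oo) ->
  exists del : R, (1 <= del)%R /\ \sum_(j < d) s one j = del%:E.
Proof.
move=> ex fi; have [s0 s1 _] := ex.
exists (\sum_(j < d) fine (s one j))%R; split; last exact: sum_fin.
rewrite -lee_fin -sum_fin//.
by rewrite -(s1 one); apply: term_le_sum.
Qed.

Lemma alg_comp (R : realType) (d : nat) (s : 'I_d -> 'I_d -> \bar R) one i (rho : R) :
  exchange_matrix s -> (0 < rho)%R -> s i one = rho%:E ->
  \sum_(k < d) s i k = rho%:E * \sum_(k < d) s one k.
Proof.
move=> ex r0 h; have [s0 _ _] := ex.
rewrite ge0_sume_distrr//; apply: eq_bigr => k _.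
by rewrite -h; exact: (ex_comp k ex r0 h).
Qed.

Lemma alg_Cbar (R : realType) (dO : measure_display) (Omega : measurableType dO)
  (d : nat) (S : 'I_d -> 'I_d -> R -> Omega -> \bar R) (T : R)
  (C : 'I_d -> Omega -> \bar R) (x : Omega) (one : 'I_d) :
  exchange_matrix (fun i j => S i j T x) -> (forall j, S one j T x < +oo) ->
  value_vector (fun i j => S i j T x) (C ^~ x) ->
  Cbar S T C x = Sbar S one T x * C one x.
Proof.
move=> ex fi [c0 vv]; have [s0 s1 sm] := ex.
have [del [del1 hD]] := alg_D ex fi.
have del0 : del != 0%R by rewrite gt_eqF// (lt_le_trans ltr01).
have hS1 : Sbar S one T x = (del^-1)%:E by rewrite /Sbar hD inver (negbTE del0).
have hterm j : active S T x j -> Sbar S j T x * C j x = (del^-1)%:E * C one x.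
  rewrite /active => aj.
  have Sj1 : S j one T x < +oo.
    by apply: le_lt_trans aj; apply: (@term_le_sum _ _ (fun k => S j k T x)).
  have [rho [r0 h1j hj1]] := ex_fin ex (fi j) Sj1.
  have ri0 : (0 < rho^-1)%R by rewrite invr_gt0.
  rewrite /Sbar (alg_comp ex ri0 hj1) hD -EFinM inver mulf_eq0.
  rewrite invr_eq0 (gt_eqF r0) (negbTE del0) /= invfM invrK.
  have vj : S one j T x * C j x = C one x.
    apply: vv; rewrite h1j; move=> [[h _]|[h _]] //; case: h => h.
    by move: r0; rewrite h ltxx.
  rewrite -vj.
  by rewrite h1j muleA -EFinM mulrC.
rewrite /Cbar hS1.
rewrite (eq_bigr (fun=> (del^-1)%:E * C one x)); last by move=> j; exact: hterm.
rewrite (_ : \sum_(j < d | active S T x j) _ =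
  \sum_(j in [pred j | active S T x j]) ((del^-1)%:E * C one x)); last first.
  by apply: eq_bigl => j; rewrite inE.
have : (0 < #|[pred j | active S T x j]|)%N.
  apply/card_gt0P; exists one; rewrite inE /active hD; exact: ltry.
move=> n0.
rewrite sumr_const.
have nm (y : \bar R) m : (y *+ m)%R = (m%:R)%:E * y by rewrite mule_natl.
rewrite nm muleA -EFinM mulVf ?mul1e//.
by rewrite pnatr_eq0 -lt0n.
Qed.

Lemma finE (R : realType) (x : \bar R) : 0 <= x -> x < +oo -> exists r : R, x = r%:E.
Proof. by case: x => [r| |] //; exists r. Qed.

Lemma ex_inv (R : realType) (d : nat) (s : 'I_d -> 'I_d -> \bar R) i j (r : R) :
  exchange_matrix s -> (0 < r)%R -> s i j = r%:E -> s j i = (r^-1)%:E.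
Proof.
move=> ex r0 h; have [s0 s1 sm] := ex.
have e : s i j * s j i = 1.
  rewrite (sm i j i) ?s1// h; move=> [[hh _]|[hh _]] //; case: hh => hh.
  by move: r0; rewrite hh ltxx.
move: e (s0 j i); rewrite h; case: (s j i) => [b| |] //.
- move=> e2 _; have e3 : (r * b = 1)%R by apply: EFin_inj; rewrite EFinM.
  have rn0 : r != 0%R by rewrite gt_eqF.
  by congr EFin; rewrite -(mulKf rn0 b) e3 mulr1.
- by rewrite gt0_muley ?lte_fin.
Qed.

Lemma alg_num (R : realType) (d : nat) (s : 'I_d -> 'I_d -> \bar R) one i j :
  exchange_matrix s -> s one i < +oo -> s one j < +oo ->
  s i j * s one i = (if 0 < s j i then s one j else 0).
Proof.
move=> ex fi fj; have [s0 s1 sm] := ex.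
have [h0|hp] := eqVneq (s one i) 0.
  rewrite h0 mule0; case: ifPn => // sji.
  have := s0 one j; rewrite le_eqVlt => /orP[/eqP <-//|sj].
  have [sig hs] : exists sig : R, s one j = sig%:E.
    exact: finE.
  have sig0 : (0 < sig)%R by rewrite -lte_fin -hs.
  have hj1 := ex_inv ex sig0 hs.
  have sig1 : (0 < sig^-1)%R by rewrite invr_gt0.
  move: sji; rewrite (ex_comp i ex sig1 hj1) hj1 h0 mule0 ltxx//.
have [rho hr] : exists rho : R, s one i = rho%:E.
  exact: finE.
have r0 : (0 < rho)%R.
  have := s0 one i; rewrite hr lee_fin le_eqVlt => /orP[/eqP r0'|//].
  by move: hp; rewrite hr -r0' eqxx.
have e1 : s one j = s one i * s i j := ex_comp j ex r0 hr.
rewrite muleC -e1.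
case: ifPn => // sji.
have := s0 one j; rewrite le_eqVlt => /orP[/eqP <-//|sj].
have [sig hs] : exists sig : R, s one j = sig%:E.
  exact: finE.
have sig0 : (0 < sig)%R by rewrite -lte_fin -hs.
have hj1 := ex_inv ex sig0 hs.
have sig1 : (0 < sig^-1)%R by rewrite invr_gt0.
exfalso; move: sji; rewrite (ex_comp i ex sig1 hj1) hj1 hr -EFinM lte_fin.
by rewrite mulr_gt0.
Qed.

Lemma alg_vv (R : realType) (d : nat) (s : 'I_d -> 'I_d -> \bar R) (c : 'I_d -> \bar R) one i :
  value_vector s c -> (forall j, 0 <= s one j) -> s one i < +oo ->
  c i * s one i = (if s one i == 0 then 0 else c one).
Proof.
move=> [c0 vv] s0 fi; case: ifPn => [/eqP ->|h]; first by rewrite mule0.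
rewrite muleC; apply: vv; move=> [[hh _]|[hh _]]; first by move: h; rewrite hh eqxx.
by move: fi; rewrite hh ltxx.
Qed.

Lemma alg_final (R : realType) (d : nat) (s : 'I_d -> 'I_d -> \bar R) one i (Y W V : \bar R) :
  exchange_matrix s -> (forall j, s one j < +oo) -> \sum_(k < d) s i k < +oo ->
  0 <= W -> 0 <= V ->
  Y * \sum_(k < d) s one k = W * s one i + V ->
  Y * \sum_(k < d) s i k = W + s i one * V.
Proof.
move=> ex fi ai W0 V0 e; have [s0 s1 sm] := ex.
have Si1 : s i one < +oo.
  by apply: le_lt_trans ai; apply: (@term_le_sum _ _ (fun k => s i k)).
have [rho [r0 h1i hi1]] := ex_fin ex (fi i) Si1.
have ri0 : (0 < rho^-1)%R by rewrite invr_gt0.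
rewrite (alg_comp ex ri0 hi1) muleCA e hi1 ge0_muleDr//; last first.
  by rewrite h1i mule_ge0// lee_fin ltW.
by rewrite h1i muleCA -EFinM mulVf ?mule1// gt_eqF.
Qed.
Unset Implicit Arguments.
Theorem mainTheorem8 (R : realType) (dO : measure_display)
  (Omega : measurableType dO) (T : R) (F : R -> set (set Omega))
  (d : nat) (d_gt0 : (0 < d)%N)
  (S : 'I_d -> 'I_d -> R -> Omega -> \bar R)
  (Q1 : probability Omega R) :
  let one := Ordinal d_gt0 in
  (0 < T)%R ->
  filtration T F ->
  (* S(t) is an exchange matrix *)
  (forall t x, (0 <= t <= T)%R -> exchange_matrix (fun i j => S i j t x)) ->
  (* adaptedness *)
  (forall i j t, (0 <= t <= T)%R -> G_measurable (F t) (S i j t)) ->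
  (* right-continuous paths *)
  (forall i j x t, (0 <= t)%R -> (t < T)%R ->
     S i j ^~ x u @[u --> t^'+] --> S i j t x) ->
  (* A(0) = {1,...,d} *)
  (forall i x, active S 0%R x i) ->
  (* each S_{1,j} is a real-valued nonnegative Q1-martingale *)
  (forall j t x, (0 <= t <= T)%R -> S one j t x < +oo) ->
  (forall j t, (0 <= t <= T)%R -> \int[Q1]_x S one j t x < +oo) ->
  (forall j s t A, (0 <= s)%R -> (s <= t)%R -> (t <= T)%R -> F s A ->
     \int[Q1]_(x in A) S one j t x = \int[Q1]_(x in A) S one j s x) ->
  exists Q : 'I_d -> probability Omega R,
    (* dQ_i/dQ_1 = S_{i,1}(0) S_{1,i}(T) *)
    (forall i A, measurable A ->
       Q i A = \int[Q1]_(x in A) (S i one 0%R x * S one i T x)) /\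
    numeraire_consistent T F S Q /\
    (forall i A, measurable A -> Q1 A = 0 -> Q i A = 0) /\
    (forall A, measurable A -> (Q1 A = 0 <-> \sum_(i < d) Q i A = 0)) /\
    exists Qbar : probability Omega R,
      (forall x0 A, measurable A ->
         Qbar A = \sum_(i < d) Sbar S i 0%R x0 * Q i A) /\
      forall (r : R) (C : 'I_d -> Omega -> \bar R),
        (0 <= r <= T)%R ->
        (forall j, measurable_fun setT (C j)) ->
        (forall x, value_vector (fun i j => S i j T x) (C ^~ x)) ->
        \int[Qbar]_x Cbar S T C x < +oo ->
        forall Y, cond_exp Qbar (F r) (Cbar S T C) Y ->
          (forall Z, cond_exp Q1 (F r) (C one) Z ->
             {ae Q1, forall x, Y x = Sbar S one r x * Z x}) /\
          (forall i W V,
             cond_exp (Q i) (F r) (C i) W ->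
             cond_exp Q1 (F r)
               (fun x => if S one i T x == 0 then C one x else 0) V ->
             {ae Q1, forall x, active S r x i ->
                Y x / Sbar S i r x = W x + S i one r x * V x}).
Proof.
move=> one T0 [sF Fmono FT Frc F0] ex adapt rc act0 fin1 int1 mart.
have tT : (0 <= T <= T)%R by rewrite (ltW T0) lexx.
have t0 : (0 <= (0:R) <= T)%R by rewrite lexx (ltW T0).
have Fm t : (0 <= t <= T)%R -> forall A, F t A -> measurable A.
  move=> /andP[t0' tT'] A FA; have : F T A by exact: (Fmono t T t0' tT' (lexx T)).
  by rewrite FT.
have FsT t : (0 <= t <= T)%R -> F t setT.
  by move=> ht; case: (sF t ht) => G0 GC _; rewrite -(setD0 setT); exact: GC.
have mS i j t : (0 <= t <= T)%R -> measurable_fun setT (S i j t).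
  by move=> ht; exact: (@Gmeas_meas _ _ _ (F t) (S i j t) setT (Fm t ht) (adapt i j t ht)).
have S0c i j x y : S i j 0%R x = S i j 0%R y.
  have := adapt i j 0%R t0 [set S i j 0%R x] (emeasurable_set1 _).
  move=> /F0 [E|E].
  - by have : (S i j 0%R @^-1` [set S i j 0%R x]) x by []; rewrite E.
  - by have : (S i j 0%R @^-1` [set S i j 0%R x]) y by rewrite E.
have Sge0 i j t x : (0 <= t <= T)%R -> 0 <= S i j t x by move=> ht; case: (ex t x ht).
have fin0 i j x : S i j 0%R x < +oo.
  apply: le_lt_trans (act0 i x); apply: term_le_sum => k; exact: Sge0.
have P1 : (Q1 : {measure set Omega -> \bar R}) setT = 1 by exact: probability_setT.
pose pt : Omega := point.
pose a j := fine (S one j 0%R pt).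
have aE j x : S one j 0%R x = (a j)%:E.
  by rewrite (S0c _ _ x pt) /a fineK // ge0_fin_numE ?fin0 ?Sge0.
have apos j : (0 < a j)%R.
  have [rho [r0 h1 h2]] := ex_fin (ex 0%R pt t0) (fin0 one j pt) (fin0 j one pt).
  by rewrite /a h1.
have aiE i x : S i one 0%R x = ((a i)^-1)%:E.
  by rewrite (S0c _ _ x pt); apply: (ex_inv (ex 0%R pt t0) (apos i)); rewrite /= aE.
have a1 : a one = 1%R by have [_ s1 _] := ex 0%R pt t0; rewrite /a s1.
have martT j t B : (0 <= t <= T)%R -> F t B ->
    \int[Q1]_(x in B) S one j T x = \int[Q1]_(x in B) S one j t x.
  by move=> /andP[t0' tT'] FB; apply: mart.
have Ma j : \int[Q1]_x S one j T x = (a j)%:E.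
  rewrite (martT j 0%R setT t0 (FsT _ t0)).
  under eq_integral do rewrite aE.
  by rewrite integral_cst// P1 mule1.
pose dens i x := ((a i)^-1)%:E * S one i T x.
have mdens i : measurable_fun setT (dens i).
  by apply: emeasurable_funM => //; exact: mS.
have dens0 i x : 0 <= dens i x.
  by apply: mule_ge0; [rewrite lee_fin invr_ge0 ltW|exact: Sge0].
have densf i x : dens i x \is a fin_num.
  apply: fin_numM => //; rewrite ge0_fin_numE; [exact: (fin1 _ _ _ tT)|exact: Sge0].
have dens1 i : \int[Q1]_x dens i x = 1.
  rewrite ge0_integralZl_EFin//; last 3 first.
  - by move=> x _; exact: Sge0.
  - exact: mS.
  - by rewrite invr_ge0 ltW.
  by rewrite Ma -EFinM mulVf// gt_eqF.
pose Q : 'I_d -> probability Omega R := fun i => dprob Q1 (dens i).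
exists Q.
have QE i A : Q i A = \int[Q1]_(x in A) dens i x.
  exact: (@dprobE _ _ _ Q1 (dens i) (mdens i) (dens0 i) (dens1 i) A).
have Qint i f E : (forall x, 0 <= f x) -> measurable E -> measurable_fun E f ->
   \int[Q i]_(x in E) f x = \int[Q1]_(x in E) (f x * dens i x).
  move=> f0 mE mf; rewrite -dmeas_integral//.
  apply: eq_measure_integral => A mA _.
  change (dprob Q1 (dens i) A = dmeas Q1 (dens i) A).
  by rewrite -[LHS]/(Q i A) QE dmeasE.
have s1T x : S one one T x = 1 by have [_ s1 _] := ex T x tT.
split.
  move=> i A mA; rewrite QE; apply: eq_integral => x _; by rewrite /dens aiE.
split.
  move=> i j t A ht FA x0.
  have mA := Fm t ht _ FA.
  have E := sigma_algebra_id (sF t ht).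
  have Bset : [set x | 0 < S j i t x] = setT `\` (S j i t @^-1` [set 0]).
    apply/seteqP; split => x /=.
    - move=> h; split => // e; move: h; rewrite /= in e; by rewrite e ltxx.
    - move=> [_ ne]; rewrite lt_neqAle Sge0 // andbT eq_sym; apply/eqP => e; exact: ne e.
  have FB : F t [set x | 0 < S j i t x].
    rewrite Bset; case: (sF t ht) => _ GC _; apply: GC.
    exact: (adapt j i t ht _ (emeasurable_set1 0)).
  have FAB : F t (A `&` [set x | 0 < S j i t x]).
    have : (F t).-sigma.-measurable (A `&` [set x | 0 < S j i t x]).
      apply: measurableI.
      - by change (<<s F t>> A); rewrite E.
      - by change (<<s F t>> [set x | 0 < S j i t x]); rewrite E.
    by move=> h; change (<<s F t>> (A `&` [set x | 0 < S j i t x])) in h; rewrite E in h.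
  have mAB := Fm t ht _ FAB.
  rewrite Qint//; last 2 first.
  - by move=> x; exact: Sge0.
  - by apply: measurable_funTS; apply: mS.
  rewrite /dens; under eq_integral do rewrite muleCA.
  rewrite ge0_integralZl_EFin//; last 3 first.
  - by move=> x _; apply: mule_ge0; exact: Sge0.
  - by apply: measurable_funTS; apply: emeasurable_funM; apply: mS.
  - by rewrite invr_ge0 ltW.
  rewrite (@tower _ _ _ (F t) Q1 (S one i T) (S one i t) (Fm t ht) (sF t ht)) //;
    try (by apply: mS); try (by move=> x; apply: Sge0);
    try (by move=> x; rewrite ge0_fin_numE ?fin1 //; apply: Sge0);
    try (by move=> B' FB'; apply: martT); try exact: adapt.
  under eq_integral => x _ do rewrite (alg_num (ex t x ht) (fin1 i t x ht) (fin1 j t x ht)).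
  rewrite QE ge0_integralZl_EFin//; last 3 first.
  - by move=> x _; exact: Sge0.
  - by apply: measurable_funTS; exact: mS.
  - by rewrite invr_ge0 ltW.
  rewrite (martT j t _ ht FAB) integral_mkcondr.
  have ai0 : (0 < (a i)^-1)%R by rewrite invr_gt0.
  rewrite (ex_comp j (ex 0%R x0 t0) ai0 (aiE i x0)) aiE aE muleA -!EFinM.
  have aj0 : a j != 0%R by rewrite gt_eqF.
  rewrite mulfK//; congr (_ * _).
  apply: eq_integral => x _; rewrite /patch /=.
  case: (boolP (0 < S j i t x)) => h; first by rewrite mem_set.
  rewrite ifF //; apply/negP => /set_mem /= h'; by rewrite h' in h.
have Qnull i A : measurable A -> Q1 A = 0 -> Q i A = 0.
  move=> mA QA; rewrite QE; apply: null_set_integral => //.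
  exact: measurable_funTS (mdens i).
split; first exact: Qnull.
split.
  move=> A mA; split => [QA|h].
    by rewrite big1 // => i _; exact: Qnull.
  have : Q one A <= \sum_(i < d) Q i A.
    by apply: (@term_le_sum _ _ (fun i => Q i A)) => i; exact: measure_ge0.
  rewrite h QE (eq_integral (cst 1)); last first.
    by move=> x _; rewrite /dens a1 invr1 mul1e s1T.
  rewrite integral_cst// mul1e => h0.
  by apply/eqP; rewrite eq_le h0 measure_ge0.
pose A0 := (\sum_(j < d) a j)%R.
have A0pos : (0 < A0)%R.
  rewrite /A0 (bigD1 one)//= a1; apply: (lt_le_trans ltr01); rewrite lerDl.
  by apply: sumr_ge0 => j _; exact: ltW.
have A0n0 : A0 != 0%R by rewrite gt_eqF.
pose Dt t x := \sum_(j < d) S one j t x.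
have mDt t : (0 <= t <= T)%R -> measurable_fun setT (Dt t).
  by move=> ht; apply: emeasurable_sum => j; exact: mS.
have Dt0 t x : (0 <= t <= T)%R -> 0 <= Dt t x.
  by move=> ht; apply: sume_ge0 => j _; exact: Sge0.
have DtE t x : (0 <= t <= T)%R -> exists del : R, (1 <= del)%R /\ Dt t x = del%:E.
  move=> ht; exact: (alg_D (ex t x ht) (fun j => fin1 j t x ht)).
have Dtf t x : (0 <= t <= T)%R -> Dt t x \is a fin_num.
  by move=> ht; have [del [_ ->]] := DtE t x ht.
pose Db x := (A0^-1)%:E * Dt T x.
have mDb : measurable_fun setT Db by apply: emeasurable_funM => //; exact: mDt.
have Db0 x : 0 <= Db x by apply: mule_ge0; [rewrite lee_fin invr_ge0 ltW|exact: Dt0].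
have Dbf x : Db x \is a fin_num by apply: fin_numM => //; exact: Dtf.
have intDt t B : (0 <= t <= T)%R -> measurable B ->
    \int[Q1]_(x in B) Dt t x = \sum_(j < d) \int[Q1]_(x in B) S one j t x.
  move=> ht mB; rewrite ge0_integral_sum//.
  - by move=> j; apply: measurable_funTS; exact: mS.
  - by move=> j x _; exact: Sge0.
have Db1 : \int[Q1]_x Db x = 1.
  rewrite ge0_integralZl_EFin//; last 3 first.
  - by move=> x _; exact: Dt0.
  - exact: mDt.
  - by rewrite invr_ge0 ltW.
  rewrite intDt// (eq_bigr (fun j => (a j)%:E)); last by move=> j _; exact: Ma.
  by rewrite sumEFin -EFinM mulVf.
pose Qbar : probability Omega R := dprob Q1 Db.
exists Qbar.
have QbE A : Qbar A = \int[Q1]_(x in A) Db x.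
  exact: (@dprobE _ _ _ Q1 Db mDb Db0 Db1 A).
have Qbint f E : (forall x, 0 <= f x) -> measurable E -> measurable_fun E f ->
   \int[Qbar]_(x in E) f x = \int[Q1]_(x in E) (f x * Db x).
  move=> f0 mE mf; rewrite -dmeas_integral//.
  apply: eq_measure_integral => A mA _.
  change (dprob Q1 Db A = dmeas Q1 Db A).
  by rewrite -[LHS]/(Qbar A) QbE dmeasE.
split.
  move=> x0 A mA.
  have SbE i : Sbar S i 0%R x0 = ((a i / A0))%:E.
    have ai0 : (0 < (a i)^-1)%R by rewrite invr_gt0.
    rewrite /Sbar (alg_comp (ex 0%R x0 t0) ai0 (aiE i x0)).
    rewrite (eq_bigr (fun k => (a k)%:E)); last by move=> k _; rewrite aE.
    rewrite sumEFin -/A0 -EFinM inver mulf_eq0 invr_eq0 (gt_eqF (apos i)) (negbTE A0n0) /=.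
    by rewrite invfM invrK mulrC.
  rewrite QbE; under eq_bigr do rewrite SbE QE.
  transitivity (\sum_(i < d) (A0^-1)%:E * \int[Q1]_(x in A) S one i T x).
  - rewrite /Db ge0_integralZl_EFin//; last 3 first.
    + by move=> x _; exact: Dt0.
    + by apply: measurable_funTS; exact: mDt.
    + by rewrite invr_ge0 ltW.
    by rewrite intDt// ge0_sume_distrr// => i _; apply: integral_ge0 => x _; exact: Sge0.
  - apply: eq_bigr => i _; rewrite /dens ge0_integralZl_EFin//; last 3 first.
    + by move=> x _; exact: Sge0.
    + by apply: measurable_funTS; exact: mS.
    + by rewrite invr_ge0 ltW.
    rewrite muleA -EFinM; congr (_ * _); congr EFin.
    by rewrite mulrAC mulfV ?mul1r // gt_eqF.
move=> r C hr mC vv intC Y [GY Y0 eqY].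
have GM := Fm r hr.
have sG := sF r hr.
have mY : measurable_fun setT Y := @Gmeas_meas _ _ _ (F r) Y setT GM GY.
have C0 j x : 0 <= C j x by case: (vv x) => c0 _; exact: c0.
have CbE x : Cbar S T C x = Sbar S one T x * C one x.
  exact: (alg_Cbar (ex T x tT) (fun j => fin1 j T x tT) (vv x)).
have SbT x : Sbar S one T x = ((fine (Dt T x))^-1)%:E.
  have [del [del1 hd]] := DtE T x tT.
  change ((Dt T x)^-1 = ((fine (Dt T x))^-1)%:E).
  by rewrite hd /= inver gt_eqF// (lt_le_trans ltr01 del1).
have mSbT : measurable_fun setT (Sbar S one T).
  rewrite (_ : Sbar S one T = fun x => ((fine (Dt T x))^-1)%:E); last first.
    by apply/funext => x; exact: SbT.
  apply/measurable_EFinP.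
  apply: (measurableT_comp (measurable_invR R)).
  by apply: measurableT_comp; [exact: fine_measurable|exact: mDt].
have SbDb x : Sbar S one T x * C one x * Db x = (A0^-1)%:E * C one x.
  have [del [del1 hd]] := DtE T x tT.
  rewrite SbT /Db hd /= -EFinM muleAC -EFinM; congr (_ * _); congr EFin.
  by rewrite mulrCA mulVf ?mulr1 // gt_eqF// (lt_le_trans ltr01 del1).
have Sb0 x : 0 <= Sbar S one T x by rewrite SbT lee_fin invr_ge0 fine_ge0// Dt0.
have RC B : measurable B ->
    \int[Qbar]_(x in B) Cbar S T C x = (A0^-1)%:E * \int[Q1]_(x in B) C one x.
  move=> mB; rewrite (eq_integral (fun x => Sbar S one T x * C one x)); last first.
    by move=> x _; exact: CbE.
  rewrite Qbint//; last 2 first.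
  - by move=> x; apply: mule_ge0.
  - by apply: measurable_funTS; apply: emeasurable_funM.
  under eq_integral do rewrite SbDb.
  rewrite ge0_integralZl_EFin//; last 2 first.
  - exact: measurable_funTS.
  - by rewrite invr_ge0 ltW.
have DtG : G_measurable (F r) (Dt r).
  apply: Gmeas_OG => //; apply: emeasurable_sum => j.
  exact: (@GmeasP _ _ _ (F r) (S one j r) setT (adapt one j r hr)).
have GYD : G_measurable (F r) (fun x => Y x * Dt r x).
  apply: Gmeas_OG => //; apply: emeasurable_funM.
  - exact: (@GmeasP _ _ _ (F r) Y setT GY).
  - exact: (@GmeasP _ _ _ (F r) (Dt r) setT DtG).
have YD0 x : 0 <= Y x * Dt r x by apply: mule_ge0 => //; exact: Dt0.
have towerD B : F r B ->
    \int[Q1]_(x in B) (Y x * Dt T x) = \int[Q1]_(x in B) (Y x * Dt r x).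
  move=> FB; apply: (@tower _ _ _ (F r) Q1 (Dt T) (Dt r) GM sG) => //.
  - exact: mDt.
  - exact: mDt.
  - by move=> x; exact: Dt0.
  - by move=> x; exact: Dt0.
  - by move=> x; exact: Dtf.
  - by move=> x; exact: Dtf.
  - move=> B' FB'; have mB' := GM _ FB'.
    rewrite !intDt//; apply: eq_bigr => j _; exact: martT.
have KB B : F r B ->
    \int[Q1]_(x in B) (Y x * Dt r x) = \int[Q1]_(x in B) C one x.
  move=> FB; have mB := GM _ FB.
  have := eqY B FB; rewrite RC// Qbint//; last exact: measurable_funTS.
  rewrite /Db; under eq_integral do rewrite muleCA.
  rewrite ge0_integralZl_EFin//; last 3 first.
  - by move=> x _; apply: mule_ge0 => //; exact: Dt0.
  - by apply: measurable_funTS; apply: emeasurable_funM => //; exact: mDt.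
  - by rewrite invr_ge0 ltW.
  rewrite towerD// => e.
  have := congr1 (fun z => A0%:E * z) e.
  by rewrite !muleA -!EFinM mulfV // !mul1e.
have intC1 : \int[Q1]_x C one x < +oo.
  move: intC; rewrite RC//.
  case: (\int[Q1]_x C one x) => [c _| |] //; first exact: ltry.
  by rewrite gt0_muley ?ltxx// lte_fin invr_gt0.
have intYD : \int[Q1]_x (Y x * Dt r x) < +oo by rewrite KB //; exact: FsT.
split.
  move=> Z [GZ Z0 eqZ].
  have h := @uniq_ce _ _ _ (F r) Q1 (fun x => Y x * Dt r x) Z GM sG GYD GZ YD0 Z0 intYD.
  have {}h : {ae Q1, forall x, Y x * Dt r x = Z x}.
    by apply: h => B FB; rewrite KB// eqZ.
  apply: filterS h => x hx.
  have [del [del1 hd]] := DtE r x hr.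
  have del0 : del != 0%R by rewrite gt_eqF// (lt_le_trans ltr01 del1).
  rewrite -hx; change (Y x = (Dt r x)^-1 * (Y x * Dt r x)).
  by rewrite hd inver (negbTE del0) muleCA -EFinM mulVf ?mule1.
move=> i W V [GW W0 eqW] [GV V0 eqV].
have mW : measurable_fun setT W := @Gmeas_meas _ _ _ (F r) W setT GM GW.
have mV : measurable_fun setT V := @Gmeas_meas _ _ _ (F r) V setT GM GV.
have mset0 t j : (0 <= t <= T)%R -> measurable [set x | S one j t x == 0].
  move=> ht; rewrite (_ : [set x | _] = S one j t @^-1` [set 0]).
    by rewrite -[X in measurable X]setTI; apply: (mS one j t ht) => //; exact: emeasurable_set1.
  by apply/seteqP; split => x /= /eqP.
have mNe : measurable_fun setT (fun x => if S one i T x == 0 then 0 else C one x).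
  by apply: measurable_fun_ifT => //; apply: mbool; exact: mset0.
have mEq : measurable_fun setT (fun x => if S one i T x == 0 then C one x else 0).
  by apply: measurable_fun_ifT => //; apply: mbool; exact: mset0.
have KU B : F r B -> \int[Q1]_(x in B) (W x * S one i r x) =
    \int[Q1]_(x in B) (if S one i T x == 0 then 0 else C one x).
  move=> FB; have mB := GM _ FB.
  have := eqW B FB.
  rewrite !Qint//. all: try exact: measurable_funTS.
  rewrite /dens; under eq_integral do rewrite muleCA.
  under [in X in _ = X -> _]eq_integral do rewrite muleCA.
  rewrite !ge0_integralZl_EFin//; last 6 first.
  - by move=> x _; apply: mule_ge0 => //; exact: Sge0.
  - by apply: measurable_funTS; apply: emeasurable_funM => //; exact: mS.
  - by rewrite invr_ge0 ltW.
  - by move=> x _; apply: mule_ge0 => //; exact: Sge0.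
  - by apply: measurable_funTS; apply: emeasurable_funM => //; exact: mS.
  - by rewrite invr_ge0 ltW.
  rewrite (@tower _ _ _ (F r) Q1 (S one i T) (S one i r) GM sG) //; last 7 first.
  - exact: mS.
  - exact: mS.
  - by move=> x; exact: Sge0.
  - by move=> x; exact: Sge0.
  - by move=> x; rewrite ge0_fin_numE ?Sge0 ?fin1.
  - by move=> x; rewrite ge0_fin_numE ?Sge0 ?fin1.
  - by move=> B' FB'; exact: martT.
  move=> e; have := congr1 (fun z => (a i)%:E * z) e.
  rewrite !muleA -!EFinM mulfV ?gt_eqF// !mul1e => ->.
  apply: eq_integral => x _.
  by rewrite (alg_vv (vv x) (fun j => Sge0 one j T x tT) (fin1 i T x tT)).
pose U x := W x * S one i r x + V x.
have GU : G_measurable (F r) U.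
  apply: Gmeas_OG => //; apply: emeasurable_funD.
    apply: emeasurable_funM.
    - exact: (@GmeasP _ _ _ (F r) W setT GW).
    - exact: (@GmeasP _ _ _ (F r) (S one i r) setT (adapt one i r hr)).
  exact: (@GmeasP _ _ _ (F r) V setT GV).
have U0 x : 0 <= U x by apply: adde_ge0 => //; apply: mule_ge0 => //; exact: Sge0.
have h := @uniq_ce _ _ _ (F r) Q1 (fun x => Y x * Dt r x) U GM sG GYD GU YD0 U0 intYD.
have {}h : {ae Q1, forall x, Y x * Dt r x = U x}.
  apply: h => B FB; have mB := GM _ FB.
  rewrite KB// /U ge0_integralD//; try (by move=> x _; apply: mule_ge0 => //; exact: Sge0);
    try (by apply: measurable_funTS; apply: emeasurable_funM => //; exact: mS);
    try exact: measurable_funTS.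
  rewrite KU// eqV// -ge0_integralD//; try (by move=> x _; case: ifP);
    try exact: measurable_funTS.
  by apply: eq_integral => x _; case: ifP; rewrite ?add0e ?adde0.
apply: filterS h => x hx ax.
rewrite /Sbar inveK.
exact: (alg_final (ex r x hr) (fun j => fin1 j r x hr) ax (W0 x) (V0 x) hx).
Qed.
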